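(* Let $(\widetilde{\mathbf{x}}_\ell,y_\ell)$, $\ell=1,\dots,N$, be data with $\widetilde{\mathbf{x}}_\ell\in\mathbb{R}^d$, and let $y^N=(y_1,\dots,y_N)^\top$. Assume the Gram matrix $G$ is invertible. Write $G=U\Lambda U^\top$, where $U$ is orthogonal and $\Lambda=\mathrm{diag}(\widehat\mu_1,\dots,\widehat\mu_N)$. Let $D=\mathrm{diag}\big(\frac{\widehat\mu_1}{\widehat\mu_1+\lambda},\dots,\frac{\widehat\mu_N}{\widehat\mu_N+\lambda}\big)$. Then the $L^2$-boosting estimate after $m$ steps satisfies $$\|\widehat f^{(m)}\|_H^2=\frac1N(y^N)^\top U\big(I-(I-D)^m\big)^2\Lambda^{-1}U^\top y^N .$$
   Context: $H$ is an RKHS with positive definite kernel $K$; in the paper, $H=H_1\oplus\cdots\oplus H_d$ is the additive RKHS of Gaussian kernels on the coordinates. Gram matrix: $G_{ij}=K(\widetilde{\mathbf{x}}_i,\widetilde{\mathbf{x}}_j)/N$. Base learner: kernel ridge regression with fixed $\lambda>0$. Given $u\in\mathbb{R}^N$ it returns $\widehat g=\frac1{\sqrt N}\sum_\ell\beta_\ell K(\cdot,\widetilde{\mathbf{x}}_\ell)$ with $\beta=\frac1{\sqrt N}(G+\lambda I)^{-1}u$. Its fitted values are $Su$ with $S=G(G+\lambda I)^{-1}$. $L^2$-boosting: $\widehat f^{(0)}=0$ and $\widehat f^{(m+1)}=\widehat f^{(m)}+$(base learner fit to the residuals $y_\ell-\widehat f^{(m)}(\widetilde{\mathbf{x}}_\ell)$).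 The fitted values after $m$ steps are $(I-(I-S)^m)y^N$. *)

(* Defs.v *)
From HB Require Import structures.
From mathcomp Require Import all_boot all_order all_algebra.
From mathcomp Require Import reals.
Set Implicit Arguments. Unset Strict Implicit. Unset Printing Implicit Defensive.
Import Order.TTheory GRing.Theory Num.Theory.
Local Open Scope ring_scope.

Section RKHS.
Variables (R : realType) (X : Type).

(* An RKHS H of real functions on X with kernel K:
   - H is a real vector space with an inner product ip (bilinear, symmetric,
     positive definite);
   - ev f : X -> R is the function represented by f (injective: elements of H are functions);
   - kx y  is the kernel section K(., y) in H;
   - reproducing property: f(x) = <f, K(., x)>_H. *)
Record is_rkhs (H : lmodType R) (ip : H -> H -> R) (ev : H -> X -> R)
    (K : X -> X -> R) (kx : X -> H) : Prop := {
  rkhs_ip_linl : forall (a : R) (f g h : H), ip (a *: f + g) h = a * ip f h + ip g h;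
  rkhs_ip_sym  : forall f g : H, ip f g = ip g f;
  rkhs_ip_ge0  : forall f : H, 0 <= ip f f;
  rkhs_ip_eq0  : forall f : H, ip f f = 0 -> f = 0;
  rkhs_ev_inj  : forall f g : H, ev f =1 ev g -> f = g;
  rkhs_section : forall x y : X, ev (kx y) x = K x y;
  rkhs_reprod  : forall (f : H) (x : X), ev f x = ip f (kx x)
}.

Definition rkhs_norm2 (H : lmodType R) (ip : H -> H -> R) (f : H) : R := ip f f.

Variable (N : nat) (K : X -> X -> R) (xs : 'I_N -> X).

Definition gram : 'M[R]_N := \matrix_(i, j) (K (xs i) (xs j) / N%:R).

Variables (H : lmodType R) (ev : H -> X -> R) (kx : X -> H) (lam : R).

Definition krr_coef (u : 'cV[R]_N) : 'cV[R]_N :=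
  (Num.sqrt (N%:R : R))^-1 *: (invmx (gram + lam%:M) *m u).

Definition krr (u : 'cV[R]_N) : H :=
  (Num.sqrt (N%:R : R))^-1 *: \sum_(l < N) (krr_coef u l 0) *: kx (xs l).

Fixpoint boost (y : 'cV[R]_N) (m : nat) : H :=
  match m with
  | 0 => 0
  | m'.+1 => boost y m' + krr (\col_l (y l 0 - ev (boost y m') (xs l)))
  end.

End RKHS.

(* Main.v *)
Require Import Defs.
From HB Require Import structures.
From mathcomp Require Import all_boot all_order all_algebra.
From mathcomp Require Import reals ring lra.
Import Order.TTheory GRing.Theory Num.Theory.
Local Open Scope ring_scope.

Definition dg {R : realType} {N : nat} (f : 'I_N -> R) : 'M[R]_N :=
  diag_mx (\row_i f i).

Lemma dg_ext (R : realType) N (f g : 'I_N -> R) :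
  (forall i, f i = g i) -> dg f = dg g.
Proof. by move=> e; apply/matrixP=> i j; rewrite !mxE e. Qed.

Lemma dgM (R : realType) N (f g : 'I_N -> R) :
  dg f *m dg g = dg (fun i => f i * g i).
Proof. by rewrite /dg mulmx_diag; apply/matrixP=> i j; rewrite !mxE. Qed.

Lemma dgD (R : realType) N (f g : 'I_N -> R) :
  dg f + dg g = dg (fun i => f i + g i).
Proof. by apply/matrixP=> i j; rewrite !mxE; case: (i == j); rewrite ?mulr1n ?mulr0n ?addr0. Qed.

Lemma dgN (R : realType) N (f : 'I_N -> R) :
  - dg f = dg (fun i => - f i).
Proof. by apply/matrixP=> i j; rewrite !mxE; case: (i == j); rewrite ?mulr1n ?mulr0n ?oppr0. Qed.

Lemma dgC (R : realType) N (a : R) : a%:M = dg (fun _ : 'I_N => a).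
Proof. by apply/matrixP=> i j; rewrite !mxE. Qed.

Lemma dgX (R : realType) N (f : 'I_N -> R) k :
  dg f ^+ k = dg (fun i => f i ^+ k).
Proof.
elim: k => [|k IH]; first by rewrite expr0; transitivity (1%:M : 'M[R]_N) => //; rewrite (@dgC R N 1); apply: dg_ext=> i; rewrite expr0.
by rewrite exprS IH -mulmxE dgM; apply: dg_ext=> i; rewrite exprS.
Qed.

Lemma dgT (R : realType) N (f : 'I_N -> R) : (dg f)^T = dg f.
Proof. exact: tr_diag_mx. Qed.

Lemma mulmx_eq1_inv (R : realType) N (A B : 'M[R]_N) : A *m B = 1%:M -> invmx A = B.
Proof.
move=> h; have [uA _] := mulmx1_unit h.
by rewrite -[invmx A]mulmx1 -h mulmxA mulVmx // mul1mx.
Qed.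
Set Implicit Arguments.
Section S.
Context (R : realType) (X : Type) (H : lmodType R) (ip : H -> H -> R) (ev : H -> X -> R)
    (K : X -> X -> R) (kx : X -> H) (hR : is_rkhs ip ev K kx).

Lemma ip0l h : ip 0 h = 0.
Proof.
have := rkhs_ip_linl hR 1 0 0 h; rewrite scale1r addr0 mul1r.
by rewrite -{1}[ip 0 h]addr0 => /addrI <-.
Qed.

Lemma ipDl f g h : ip (f + g) h = ip f h + ip g h.
Proof. by have := rkhs_ip_linl hR 1 f g h; rewrite scale1r mul1r. Qed.

Lemma ipZl a f h : ip (a *: f) h = a * ip f h.
Proof. by have := rkhs_ip_linl hR a f 0 h; rewrite addr0 ip0l addr0. Qed.

Lemma ip_suml I (r : seq I) (P : pred I) (F : I -> H) h :
  ip (\sum_(i <- r | P i) F i) h = \sum_(i <- r | P i) ip (F i) h.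
Proof. exact: (big_morph (fun f => ip f h) (fun f g => ipDl f g h) (ip0l h)). Qed.

Context (N : nat) (xs : 'I_N -> X).

Definition emb (a : 'cV[R]_N) : H := (N%:R)^-1 *: \sum_l a l 0 *: kx (xs l).

Lemma ev_emb a i : ev (emb a) (xs i) = (gram K xs *m a) i 0.
Proof.
rewrite (rkhs_reprod hR) /emb ipZl ip_suml mxE big_distrr /=.
apply: eq_bigr => l _; rewrite ipZl -(rkhs_reprod hR) (rkhs_section hR) !mxE.
by ring.
Qed.

Lemma embD a b : emb (a + b) = emb a + emb b.
Proof.
by rewrite /emb -scalerDr -big_split; congr (_ *: _); apply: eq_bigr => l _; rewrite mxE scalerDl.
Qed.

Lemma norm_emb a : ip (emb a) (emb a) = (N%:R)^-1 * (a^T *m gram K xs *m a) 0 0.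
Proof.
rewrite {1}/emb ipZl ip_suml -mulmxA mxE; congr (_ * _).
apply: eq_bigr => l _; rewrite ipZl (rkhs_ip_sym hR) -(rkhs_reprod hR) ev_emb !mxE.
by [].
Qed.

Lemma krrE lam u : krr K xs kx lam u = emb (invmx (gram K xs + lam%:M) *m u).
Proof.
rewrite /krr /emb /krr_coef.
have -> : (N%:R : R)^-1 = (Num.sqrt (N%:R : R))^-1 * (Num.sqrt (N%:R : R))^-1.
  by rewrite -invfM -expr2 sqr_sqrtr // ler0n.
rewrite -scalerA; congr (_ *: _); rewrite scaler_sumr; apply: eq_bigr => l _.
by rewrite scalerA mxE.
Qed.
End S.
Arguments emb {R X H} kx {N} xs a.
Arguments norm_emb {R X H ip ev K kx} hR {N} xs a.
Arguments ev_emb {R X H ip ev K kx} hR {N} xs a i.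
Arguments krrE {R X H} K kx {N} xs lam u.
Arguments embD {R X H} kx {N} xs a b.
Unset Implicit Arguments.

Theorem lemma3 (R : realType) (d N : nat)
    (H : lmodType R) (ip : H -> H -> R) (ev : H -> 'rV[R]_d -> R)
    (K : 'rV[R]_d -> 'rV[R]_d -> R) (kx : 'rV[R]_d -> H)
    (xs : 'I_N -> 'rV[R]_d) (y : 'cV[R]_N) (lam : R)
    (U : 'M[R]_N) (mu : 'rV[R]_N) (m : nat) :
  is_rkhs ip ev K kx ->
  0 < lam ->
  gram K xs \in unitmx ->
  U^T *m U = 1%:M ->
  gram K xs = U *m diag_mx mu *m U^T ->
  let D := diag_mx (\row_i (mu 0 i / (mu 0 i + lam))) in
  rkhs_norm2 ip (boost K xs ev kx lam y m) =
    (N%:R)^-1 *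
    (y^T *m U *m (1%:M - (1%:M - D) ^+ m) ^+ 2 *m invmx (diag_mx mu) *m U^T *m y) 0 0.
Proof.
move=> hR lam0 Gu UtU GE D.
set G := gram K xs in Gu GE *.
have UUt : U *m U^T = 1%:M by apply: mulmx1C.
have UtUl : forall (p : nat) (A : 'M[R]_(p, N)), A *m U^T *m U = A.
  by move=> p A; rewrite -mulmxA UtU mulmx1.
have muE : diag_mx mu = dg (fun i => mu 0 i).
  by rewrite /dg; congr diag_mx; apply/rowP => i; rewrite mxE.
have LamE : U^T *m G *m U = diag_mx mu.
  by rewrite GE !mulmxA UtU mul1mx -mulmxA UtU mulmx1.
have key : forall A B : 'M[R]_N, U *m A *m U^T *m (U *m B *m U^T) = U *m (A *m B) *m U^T.
  by move=> A B; rewrite !mulmxA -(mulmxA _ U^T U) UtU mulmx1.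
have mu_neq0 : forall i, mu 0 i != 0.
  have : diag_mx mu \in unitmx.
    have [h1 h2] := mulmx1_unit UUt; by rewrite -LamE !unitmx_mul Gu h1 h2.
  rewrite unitmxE det_diag unitfE => /prodf_neq0 h i; exact: h.
have mu_ge0 : forall i, 0 <= mu 0 i.
  move=> i; set v := U *m delta_mx i (0 : 'I_1).
  have hN : (0 < N)%N by case: N xs y U mu i {G Gu GE UtU UUt UtUl LamE key muE mu_neq0 v D} => [|n] _ _ _ _ [].
  have := rkhs_ip_ge0 hR (emb kx xs v).
  rewrite (norm_emb hR) pmulr_rge0 ?invr_gt0 ?ltr0n //.
  have -> : v^T *m G *m v = delta_mx 0 i *m diag_mx mu *m delta_mx i 0.
    by rewrite /v trmx_mul trmx_delta -LamE !mulmxA.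
  by rewrite -rowE -colE !mxE eqxx mulr1n.
have mu_gt0 : forall i, 0 < mu 0 i by move=> i; rewrite lt_def mu_neq0 mu_ge0.
have mulE : forall (f : 'I_N -> R) i, f i != 0 -> f i * (f i)^-1 = 1.
  by move=> f i h; rewrite mulfV.
have lampos : forall i, mu 0 i + lam != 0.
  by move=> i; rewrite gt_eqF // ltr_wpDl ?mu_ge0.
set E := dg (fun i => (mu 0 i + lam)^-1).
have Ginv : invmx (G + lam%:M) = U *m E *m U^T.
  apply: mulmx_eq1_inv.
  have -> : G + lam%:M = U *m dg (fun i => mu 0 i + lam) *m U^T.
    rewrite GE muE -dgD -(dgC R N lam) mulmxDr mulmxDl; congr (_ + _).
    by rewrite mul_mx_scalar -scalemxAl UUt scalemx1.
  rewrite key /E dgM -UUt; congr (_ *m _); rewrite -[RHS]mulmx1; congr (_ *m _).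
  by rewrite (dgC R N 1); apply: dg_ext => i; rewrite mulfV.
set s := fun k (i : 'I_N) => (1 - (1 - mu 0 i / (mu 0 i + lam)) ^+ k) / mu 0 i.
have bE : forall k, boost K xs ev kx lam y k = emb kx xs (U *m (dg (s k) *m (U^T *m y))).
  elim=> [|k IH].
    rewrite /= /emb big1 ?scaler0 // => l _.
    have -> : dg (s 0) = 0 by apply/matrixP=> i j; rewrite !mxE /s expr0 subrr mul0r mul0rn.
    by rewrite mul0mx mulmx0 mxE scale0r.
  rewrite /= IH krrE.
  have -> : \col_l (y l 0 - ev (emb kx xs (U *m (dg (s k) *m (U^T *m y)))) (xs l))
      = y - G *m (U *m (dg (s k) *m (U^T *m y))).
    by apply/matrixP=> i j; rewrite ord1 !mxE (ev_emb hR) mxE.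
  rewrite -embD; congr (emb _ _ _).
  have sE : dg (s k.+1) = dg (s k) + E - E *m diag_mx mu *m dg (s k).
    rewrite /E muE !dgM dgN !dgD; apply: dg_ext => i; rewrite /s.
    have h1 := mu_neq0 i; have h2 := lampos i. rewrite exprS; field; by rewrite ?h1 ?h2.
  rewrite sE -/G Ginv GE !mulmxBr !mulmxA !UtUl.
  by rewrite mulmxBr mulmxDr !mulmxBl !mulmxDl !mulmxA addrA.
have PE : (1%:M - (1%:M - D) ^+ m) ^+ 2 *m invmx (diag_mx mu)
    = dg (s m) *m diag_mx mu *m dg (s m).
  have -> : invmx (diag_mx mu) = dg (fun i => (mu 0 i)^-1).
    apply: mulmx_eq1_inv; rewrite muE dgM (dgC R N 1); apply: dg_ext => i.
    by rewrite mulfV.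
  have -> : D = dg (fun i => mu 0 i / (mu 0 i + lam)) by [].
  rewrite muE (dgC R N 1) dgN dgD dgX dgN dgD dgX !dgM; apply: dg_ext => i.
  rewrite /s; have h1 := mu_neq0 i; field; by rewrite ?h1.
rewrite /rkhs_norm2 bE (norm_emb hR); congr (_ * _).
rewrite !trmx_mul trmxK dgT -/G GE !mulmxA !UtUl.
rewrite -(mulmxA _ (dg (s m)) (diag_mx mu)) -(mulmxA _ (dg (s m) *m diag_mx mu)) -PE.
by rewrite !mulmxA.
Qed.
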